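(* Let $\mathcal G$ be a groupoid (standing conventions) which is ubiquitously fiberwise amenable, and let $u\in\mathcal G^{(0)}$ with $\mathcal G^u_u=\{u\}$. Then for every compact $K\subseteq\mathcal G$ and every $\epsilon>0$ there exist a compact open multisection $\{C_{i,j}: i,j\in F\}$ and an index $i_u\in F$ such that $u\in C_{i_u,i_u}$ and, writing $D=\bigsqcup_{i\in F}C_{i,i_u}$, the set $Dv$ is $(K,\epsilon)$-Følner for every $v\in C_{i_u,i_u}$.
   Context: Standing conventions: a groupoid is a $\sigma$-compact, locally compact, Hausdorff, étale, ample groupoid $\mathcal G$ with compact unit space $\mathcal G^{(0)}$; $\mathcal G^u_u=\{g:s(g)=r(g)=u\}$. For $A,B\subseteq\mathcal G$, $AB=\{ab:a\in A,b\in B,s(a)=r(b)\}$ and $Av=\{a\in A:s(a)=v\}$. A multisection is a finite family $\{C_{i,j}:i,j\in F\}$ of bisections with $C_{i,j}C_{j,k}=C_{i,k}$ and pairwise disjoint levels $C_{i,i}\subseteq\mathcal G^{(0)}$; compact open if all $C_{i,j}$ are. For compact $K$ and $\epsilon>0$, a finite nonempty $F\subseteq\mathcal G$ is $(K,\epsilon)$-Følner if $|KF\setminus F|\le\epsilon|F|$. $\mathcal G$ is ubiquitously fiberwise amenable if for every compact $K\subseteq\mathcal G$ and $\epsilon>0$ there is a compact $L\subseteq\mathcal G$ such that for every $u\in\mathcal G^{(0)}$ there is a $(K,\epsilon)$-Følner set contained in $Lu\cup\{u\}$. *)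

(* Defs.v *)
From HB Require Import structures.
From mathcomp Require Import all_boot all_order all_algebra.
From mathcomp Require Import finmap.
From mathcomp Require Import all_classical all_reals all_analysis.
Set Implicit Arguments. Unset Strict Implicit. Unset Printing Implicit Defensive.
Import Order.TTheory GRing.Theory Num.Theory.
Local Open Scope classical_set_scope.
Local Open Scope ring_scope.

Section Groupoid.
Variables (G : topologicalType) (src rng : G -> G) (mul : G -> G -> G) (inv : G -> G).

Definition unit_space : set G := range src.

(* algebraic groupoid axioms; units are elements of G *)
Definition groupoid_axioms : Prop :=
  (forall g, src (src g) = src g /\ rng (src g) = src g) /\
  (forall g, src (rng g) = rng g /\ rng (rng g) = rng g) /\
  (forall g h, src g = rng h -> src (mul g h) = src h /\ rng (mul g h) = rng g) /\
  (forall g h k, src g = rng h -> src h = rng k ->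
      mul (mul g h) k = mul g (mul h k)) /\
  (forall g, mul (rng g) g = g /\ mul g (src g) = g) /\
  (forall g, src (inv g) = rng g /\ rng (inv g) = src g /\
             mul g (inv g) = rng g /\ mul (inv g) g = src g).

Definition topological_groupoid_axioms : Prop :=
  [/\ continuous src, continuous rng, continuous inv &
      {within [set p : G * G | src p.1 = rng p.2], continuous (fun p => mul p.1 p.2)}].

Definition local_homeomorphism (f : G -> G) : Prop :=
  continuous f /\
  forall x, exists W : set G, [/\ open W, W x, {in W &, injective f} &
      forall V, open V -> V `<=` W -> open (f @` V)].

Definition sigma_compact : Prop :=
  exists Kn : nat -> set G, (forall n, compact (Kn n)) /\ \bigcup_n Kn n = setT.

Definition bisection (B : set G) : Prop :=
  [/\ open B, {in B &, injective src} & {in B &, injective rng}].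

Definition ample : Prop :=
  forall x (O : set G), open O -> O x ->
    exists B, [/\ bisection B, compact B, B x & B `<=` O].

(* the standing conventions *)
Definition ample_groupoid : Prop :=
  groupoid_axioms /\ topological_groupoid_axioms /\ hausdorff_space G /\
  locally_compact [set: G] /\ sigma_compact /\
  local_homeomorphism rng /\ local_homeomorphism src /\
  ample /\ compact unit_space.

Definition setmul (A B : set G) : set G :=
  [set g | exists a b, [/\ A a, B b, src a = rng b & g = mul a b]].

Definition fib (A : set G) (v : G) : set G := [set a | A a /\ src a = v].

Definition isotropy (u : G) : set G := [set g | src g = u /\ rng g = u].

Definition multisection (F : finType) (C : F -> F -> set G) : Prop :=
  [/\ (forall i j, bisection (C i j)),
      (forall i j k, setmul (C i j) (C j k) = C i k),
      (forall i, C i i `<=` unit_space) &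
      (forall i j, i != j -> C i i `&` C j j = set0)].

Definition compact_open_multisection (F : finType) (C : F -> F -> set G) : Prop :=
  multisection C /\ (forall i j, compact (C i j) /\ open (C i j)).

Definition folner (R : realType) (K : set G) (eps : R) (A : set G) : Prop :=
  [/\ finite_set A, A !=set0, finite_set (setmul K A `\` A) &
      ((#|` fset_set (setmul K A `\` A)|)%fset%:R <= eps * (#|` fset_set A|)%fset%:R)].

Definition ubiquitously_fiberwise_amenable (R : realType) : Prop :=
  forall (K : set G) (eps : R), compact K -> 0 < eps ->
    exists L : set G, compact L /\
      forall u, unit_space u ->
        exists A, folner K eps A /\ A `<=` fib L u `|` [set u].

End Groupoid.

(* Main.v *)
Require Import Defs.
From HB Require Import structures.
From mathcomp Require Import all_boot all_order all_algebra.
From mathcomp Require Import finmap.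
From mathcomp Require Import all_classical all_reals all_analysis.
Import Order.TTheory GRing.Theory Num.Theory.

Module MG0.
Set Implicit Arguments. Unset Strict Implicit. Unset Printing Implicit Defensive.
Local Open Scope classical_set_scope.

Notation cd A := (#|` fset_set A|)%fset.

Section Card.
Variable T : choiceType.
Implicit Types A B : set T.

Lemma cd_le A B : finite_set B -> A `<=` B -> (cd (A) <= cd (B))%N.
Proof.
move=> fB AB; have fA := sub_finite_set AB fB.
by apply: fsubset_leq_card; rewrite -fset_set_sub.
Qed.

Lemma cd_U A B : finite_set A -> finite_set B ->
  (cd (A `|` B) <= cd (A) + cd (B))%N.
Proof. by move=> fA fB; rewrite fset_setU //; apply: (leq_card_fsetU _ _). Qed.

Lemma cd_Udisj A B : finite_set A -> finite_set B -> A `&` B = set0 ->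
  (cd (A `|` B) = cd (A) + cd (B))%N.
Proof.
move=> fA fB AB; rewrite fset_setU // cardfsU.
rewrite -fset_setI // AB fset_set0 cardfs0 subn0 //.
Qed.

Lemma cd_img_le (U : choiceType) (f : T -> U) A : finite_set A ->
  (cd ((f @` A)) <= cd (A))%N.
Proof.
move=> fA; rewrite fset_set_image //.
exact: (leq_trans (leq_imfset_card _ _ _)).
Qed.

Lemma cd_img_inj (U : choiceType) (f : T -> U) A : finite_set A ->
  {in A &, injective f} ->
  (cd ((f @` A)) = cd (A))%N.
Proof.
move=> fA inj; rewrite fset_set_image // card_in_imfset //.
move=> x y; rewrite !in_fset_set // => xA yA; exact: inj.
Qed.

Lemma cd_set1 (x : T) : (cd ([set x]) = 1)%N.
Proof. by rewrite fset_set1 cardfs1. Qed.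

Lemma cd_set0 : (cd ((@set0 T)) = 0)%N.
Proof. by rewrite fset_set0 cardfs0. Qed.

Lemma cd_gt0 A : finite_set A -> A !=set0 -> (0 < cd (A))%N.
Proof.
move=> fA [x Ax]; rewrite cardfs_gt0; apply/eqP => e.
by have := fset_set_set0 fA e; move=> eA; rewrite eA in Ax.
Qed.

End Card.

End MG0.
Import MG0.

Module MG1.
Set Implicit Arguments. Unset Strict Implicit. Unset Printing Implicit Defensive.
Local Open Scope classical_set_scope.
Local Open Scope ring_scope.

Section GAlg.
Variables (G : topologicalType) (src rng : G -> G) (mul : G -> G -> G) (inv : G -> G).
Hypothesis ax : groupoid_axioms src rng mul inv.

Lemma ga_ss g : src (src g) = src g. Proof. by case: ax => [h _]; case: (h g). Qed.
Lemma ga_rs g : rng (src g) = src g. Proof. by case: ax => [h _]; case: (h g). Qed.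
Lemma ga_sr g : src (rng g) = rng g. Proof. by case: ax => [_ [h _]]; case: (h g). Qed.
Lemma ga_rr g : rng (rng g) = rng g. Proof. by case: ax => [_ [h _]]; case: (h g). Qed.
Lemma ga_smul g h : src g = rng h -> src (mul g h) = src h.
Proof. by case: ax => [_ [_ [hh _]]] e; case: (hh g h e). Qed.
Lemma ga_rmul g h : src g = rng h -> rng (mul g h) = rng g.
Proof. by case: ax => [_ [_ [hh _]]] e; case: (hh g h e). Qed.
Lemma ga_assoc g h k : src g = rng h -> src h = rng k ->
  mul (mul g h) k = mul g (mul h k).
Proof. by case: ax => [_ [_ [_ [hh _]]]]; apply: hh. Qed.
Lemma ga_mul1 g : mul (rng g) g = g.
Proof. by case: ax => [_ [_ [_ [_ [hh _]]]]]; case: (hh g). Qed.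
Lemma ga_mulr1 g : mul g (src g) = g.
Proof. by case: ax => [_ [_ [_ [_ [hh _]]]]]; case: (hh g). Qed.
Lemma ga_sinv g : src (inv g) = rng g.
Proof. by case: ax => [_ [_ [_ [_ [_ hh]]]]]; case: (hh g). Qed.
Lemma ga_rinv g : rng (inv g) = src g.
Proof. by case: ax => [_ [_ [_ [_ [_ hh]]]]]; case: (hh g) => _ []. Qed.
Lemma ga_mulV g : mul g (inv g) = rng g.
Proof. by case: ax => [_ [_ [_ [_ [_ hh]]]]]; case: (hh g) => _ [_ []]. Qed.
Lemma ga_mulVl g : mul (inv g) g = src g.
Proof. by case: ax => [_ [_ [_ [_ [_ hh]]]]]; case: (hh g) => _ [_ []]. Qed.

Lemma ga_invK g : inv (inv g) = g.
Proof.
set x := inv (inv g).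
have sx : src x = src g by rewrite /x ga_sinv ga_rinv.
have e1 : mul x (inv g) = rng g by rewrite /x ga_mulVl ga_sinv.
rewrite -[x]ga_mulr1 sx -(ga_mulVl g) -ga_assoc ?e1 ?ga_mul1 //.
  by rewrite sx ga_rinv.
by rewrite ga_sinv.
Qed.

Lemma ga_cancelr a b g : src a = rng g -> src b = rng g -> mul a g = mul b g -> a = b.
Proof.
move=> sa sb e.
rewrite -[a]ga_mulr1 -[b]ga_mulr1 sa sb -ga_mulV.
rewrite -ga_assoc ?ga_rinv // -[in RHS]ga_assoc ?ga_rinv //.
by rewrite e.
Qed.

Lemma ga_cancell a b g : src g = rng a -> src g = rng b -> mul g a = mul g b -> a = b.
Proof.
move=> sa sb e.
rewrite -[a]ga_mul1 -[b]ga_mul1 -sa -sb -ga_mulVl.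
rewrite ga_assoc ?ga_sinv // [in RHS]ga_assoc ?ga_sinv //.
by rewrite e.
Qed.

Lemma ga_unitP x : unit_space src x <-> src x = x.
Proof.
split; first by case=> g _ <-; rewrite ga_ss.
by move=> e; exists x.
Qed.
Lemma ga_unit_r x : unit_space src x -> rng x = x.
Proof. by case=> g _ <-; rewrite ga_rs. Qed.
Lemma ga_unit_s x : unit_space src x -> src x = x.
Proof. by move/ga_unitP. Qed.
Lemma ga_unit_inv x : unit_space src x -> inv x = x.
Proof.
move=> ux; rewrite -[inv x]ga_mul1 ga_rinv (ga_unit_s ux).
by rewrite ga_mulV (ga_unit_r ux).
Qed.
Lemma ga_src_unit g : unit_space src (src g). Proof. by exists g. Qed.
Lemma ga_rng_unit g : unit_space src (rng g). Proof. by exists (rng g) => //; rewrite ga_sr. Qed.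

Lemma ga_mulunit g x : unit_space src x -> src g = x -> mul g x = g.
Proof. by move=> _ <-; rewrite ga_mulr1. Qed.

Lemma ga_iso_inj u a b : isotropy src rng u = [set u] ->
  src a = u -> src b = u -> rng a = rng b -> a = b.
Proof.
move=> iso sa sb rab.
have h : isotropy src rng u (mul (inv b) a).
  split; first by rewrite ga_smul // ga_sinv.
  by rewrite ga_rmul ?ga_rinv // ga_sinv.
rewrite iso in h.
have : mul b (mul (inv b) a) = mul b u by rewrite h.
rewrite -ga_assoc ?ga_rinv ?ga_sinv // ga_mulV -rab ga_mul1 => ->.
by rewrite -sb ga_mulr1.
Qed.

End GAlg.

End MG1.
Import MG1.

Set Implicit Arguments. Unset Strict Implicit.
Definition ptd {G : topologicalType} (x0 : G) : Type := G.
HB.instance Definition _ (G : topologicalType) (x0 : G) := Topological.copy (ptd x0) G.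
HB.instance Definition _ (G : topologicalType) (x0 : G) := isPointed.Build (ptd x0) x0.
Lemma compact_cover' (G : topologicalType) (x0 : G) (K : set G) : compact K -> cover_compact K.
Proof. move=> cK. have := @compact_cover (ptd x0). move=> e. have : @compact (ptd x0) K by []. rewrite e. exact. Qed.


Module MG2.
Set Implicit Arguments. Unset Strict Implicit. Unset Printing Implicit Defensive.
Local Open Scope classical_set_scope.

Section Topo1.
Variable (G : topologicalType).

Lemma lh_open (f : G -> G) : local_homeomorphism f ->
  forall O, open O -> open (f @` O).
Proof.
move=> [_ lh] O oO; rewrite openE => _ [x Ox <-].
have [W [oW Wx _ hW]] := lh x.
have oV : open (f @` (O `&` W)) by apply: hW; [exact: openI | exact: subIsetr].
apply: (@filterS _ _ _ (f @` (O `&` W))).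
  by move=> _ [y [Oy _] <-]; exists y.
by apply: open_nbhs_nbhs; split => //; exists x.
Qed.

Lemma lh_fin (f : G -> G) : local_homeomorphism f ->
  forall K x, compact K -> finite_set (K `&` f @^-1` [set x]).
Proof.
move=> [_ lh] K x cK0.
have cK : cover_compact K by exact: (compact_cover' x).
have [Wf hWf] := choice lh.
have op : forall i, K i -> open (Wf i) by move=> i _; case: (hWf i).
have cv : K `<=` cover K Wf by move=> y Ky; exists y => //; case: (hWf y).
have [D' _ cov] := cK G K Wf op cv.
apply: (@sub_finite_set _ _ (\bigcup_(i in [set` D']) (Wf i `&` f @^-1` [set x]))).
  by move=> y [/cov [i Di Wy] fy]; exists i.
apply: bigcup_finite; first exact: finite_fset.
move=> i _; have [_ _ inj _] := hWf i.
have [[y [Wy fy]]|ny] := pselect (exists y, Wf i y /\ f y = x).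
  apply: (@sub_finite_set _ _ [set y]); last exact: finite_set1.
  move=> z [Wz fz]; apply: inj; rewrite ?inE //=.
  by rewrite fz fy.
apply: (@sub_finite_set _ _ set0); last exact: finite_set0.
by move=> z [Wz fz]; apply: ny; exists z.
Qed.

End Topo1.

Section Topo2.
Variables (G : topologicalType) (src rng : G -> G) (mul : G -> G -> G) (inv : G -> G).
Hypothesis ax : groupoid_axioms src rng mul inv.
Hypothesis tax : topological_groupoid_axioms src rng mul inv.
Hypothesis hG : hausdorff_space G.
Hypothesis lhr : local_homeomorphism rng.
Hypothesis lhs : local_homeomorphism src.
Hypothesis amp : ample src rng.
Let ss := ga_ss ax. Let rs := ga_rs ax. Let sr := ga_sr ax. Let rr := ga_rr ax.
Let smul := ga_smul ax. Let rmul := ga_rmul ax. Let assoc := ga_assoc ax.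
Let mul1 := ga_mul1 ax. Let mulr1 := ga_mulr1 ax. Let sinv := ga_sinv ax.
Let rinv := ga_rinv ax. Let mulV := ga_mulV ax. Let mulVl := ga_mulVl ax.
Let invK := ga_invK ax.

Lemma cont_src : continuous src. Proof. by case: tax. Qed.
Lemma cont_rng : continuous rng. Proof. by case: tax. Qed.
Lemma cont_inv : continuous inv. Proof. by case: tax. Qed.

Lemma ample' x X : nbhs x X ->
  exists B, [/\ bisection src rng B, compact B, B x & B `<=` X].
Proof.
rewrite nbhsE; move=> [Ob [oO Ox] OX].
have [B [bB cB Bx BO]] := amp oO Ox.
by exists B; split => //; apply: subset_trans BO OX.
Qed.

Lemma unit_nbhs u : unit_space src u -> nbhs u (unit_space src).
Proof.
move=> uu; have [W [oW Wu inj _]] := lhs.2 u.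
apply: (@filterS _ _ _ (W `&` src @^-1` W)).
  move=> g [Wg Wsg]; apply/(ga_unitP ax).
  by apply: inj; rewrite ?inE // ss.
apply: open_nbhs_nbhs; split.
  by apply: openI => //; apply: (proj1 (continuousP _) cont_src).
by split => //=; rewrite (ga_unit_s ax uu).
Qed.

Lemma inv_img B : inv @` B = inv @^-1` B.
Proof.
apply/seteqP; split.
  by move=> _ [b Bb <-]; rewrite /= (ga_invK ax).
by move=> g Bg; exists (inv g) => //; rewrite (ga_invK ax).
Qed.

Lemma inv_open B : open B -> open (inv @` B).
Proof. by move=> oB; rewrite inv_img; apply: (proj1 (continuousP _) cont_inv). Qed.

Lemma inv_compact B : compact B -> compact (inv @` B).
Proof. by move=> cB; apply: continuous_compact => //; apply: continuous_subspaceT; exact: cont_inv. Qed.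

Lemma inv_bisection B : bisection src rng B -> bisection src rng (inv @` B).
Proof.
move=> [oB is_ ir]; split; first exact: inv_open.
  move=> _ _ /set_mem [a Ba <-] /set_mem [b Bb <-]; rewrite !(ga_sinv ax) => e.
  by rewrite (ir a b) // inE.
move=> _ _ /set_mem [a Ba <-] /set_mem [b Bb <-]; rewrite !(ga_rinv ax) => e.
by rewrite (is_ a b) // inE.
Qed.

End Topo2.

End MG2.
Import MG2.

Module MG3.
Set Implicit Arguments. Unset Strict Implicit. Unset Printing Implicit Defensive.
Local Open Scope classical_set_scope.

Lemma nbhs_prodI (G : topologicalType) (a b : G) P1 P2 : nbhs a P1 -> nbhs b P2 -> nbhs (a, b) (P1 `*` P2).
Proof. move=> h1 h2. by exists (P1, P2). Qed.
Lemma nbhs_prodE (G : topologicalType) (a b : G) P : nbhs (a, b) P -> exists P1 P2, [/\ nbhs a P1, nbhs b P2 & P1 `*` P2 `<=` P].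
Proof. move=> [[P1 P2] /= [h1 h2] h]. by exists P1, P2. Qed.

Section Topo3.
Variables (G : topologicalType) (src rng : G -> G) (mul : G -> G -> G) (inv : G -> G).
Hypothesis ax : groupoid_axioms src rng mul inv.
Hypothesis tax : topological_groupoid_axioms src rng mul inv.
Hypothesis hG : hausdorff_space G.
Hypothesis lhr : local_homeomorphism rng.
Hypothesis lhs : local_homeomorphism src.
Let ss := ga_ss ax. Let rs := ga_rs ax. Let sr := ga_sr ax. Let rr := ga_rr ax.
Let smul := ga_smul ax. Let rmul := ga_rmul ax. Let assoc := ga_assoc ax.
Let mul1 := ga_mul1 ax. Let mulr1 := ga_mulr1 ax. Let sinv := ga_sinv ax.
Let rinv := ga_rinv ax. Let mulV := ga_mulV ax. Let mulVl := ga_mulVl ax.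
Let invK := ga_invK ax.

Let comp := [set p : G * G | src p.1 = rng p.2].

Lemma comp_closed : closed comp.
Proof.
rewrite -[comp]setCK; apply: open_closedC; rewrite openE => -[a b] ncp.
have neq : src a != rng b by apply/eqP.
move: hG; rewrite open_hausdorff => hG'.
have [[U1 U2] hU hO] := hG' _ _ neq; case: hU => h1 h2; case: hO => o1 o2; move/eqP => e.
rewrite /interior.
apply: (@filterS _ _ _ ((src @^-1` U1) `*` (rng @^-1` U2))).
  move=> [x y] [/= x1 y2] exy; have : (U1 `&` U2) (src x).
    by split => //; rewrite exy.
  by rewrite e.
apply: nbhs_prodI.
  by apply: (cont_src tax); apply: open_nbhs_nbhs; split => //; apply: set_mem.
by apply: (cont_rng tax); apply: open_nbhs_nbhs; split => //; apply: set_mem.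
Qed.

Lemma mul_cont_at a b N : src a = rng b -> nbhs (mul a b) N ->
  exists P1 P2, [/\ nbhs a P1, nbhs b P2 &
    forall x y, P1 x -> P2 y -> src x = rng y -> N (mul x y)].
Proof.
move=> e hN; have [_ _ _ c] := tax.
have := (proj1 (subspace_continuousP _ _) c (a, b) e N hN).
rewrite /= nbhs_simpl /= /within /=.
move=> /nbhs_prodE [P1 [P2 [n1 n2 h]]]; exists P1, P2; split => //.
by move=> x y p1 p2 exy; apply: (h (x, y)).
Qed.

Lemma setmul_compact B C : compact B -> compact C -> compact (setmul src rng mul B C).
Proof.
move=> cB cC.
have -> : setmul src rng mul B C = (fun p => mul p.1 p.2) @` ((B `*` C) `&` comp).
  apply/seteqP; split.
    by move=> _ [x [y [Bx Cy exy ->]]]; exists (x, y).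
  by move=> _ [[x y] [[/= Bx Cy] exy] <-]; exists x, y.
apply: continuous_compact.
  have [_ _ _ c] := tax; apply: continuous_subspaceW c; exact: subIsetr.
apply: compact_closedI; last exact: comp_closed.
exact: compact_setX.
Qed.

Lemma setmul_open U V : open U -> bisection src rng V -> open (setmul src rng mul U V).
Proof.
move=> oU [oV injV _]; rewrite openE => _ [b [c [Ub Vc ebc ->]]].
rewrite /interior.
set y := mul b c.
have sy : src y = src c by rewrite /y smul.
pose sig y' := xget y' [set c' | V c' /\ src c' = src y'].
have S0 : nbhs y (src @^-1` (src @` V)).
  apply: (cont_src tax); apply: open_nbhs_nbhs; split.
    exact: (lh_open lhs).
  by exists c.
have sigP : forall y', (src @` V) (src y') -> V (sig y') /\ src (sig y') = src y'.
  move=> y' [c' Vc' e]; apply: (@xgetPex _ y' [set c' | V c' /\ src c' = src y']).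
  by exists c'.
have sigC : forall P, nbhs c P -> nbhs y [set y' | P (sig y')].
  move=> P; rewrite nbhsE; move=> [Ob [oO Oc] OP].
  apply: (@filterS _ _ _ (src @^-1` (src @` (Ob `&` V)))).
    move=> y' [c' [Oc' Vc'] e] /=.
    have [Vs ss'] := sigP y' (ex_intro2 _ _ c' Vc' e).
    have -> : sig y' = c' by apply: injV; rewrite ?inE // ss' e.
    exact: OP.
  apply: (cont_src tax); apply: open_nbhs_nbhs; split.
    by apply: (lh_open lhs); apply: openI.
  by exists c.
have eb : mul y (inv c) = b.
  by rewrite /y assoc ?sinv // mulV -ebc mulr1.
have Nb : nbhs (mul y (inv c)) U by rewrite eb; apply: open_nbhs_nbhs.
have ecomp : src y = rng (inv c) by rewrite rinv.
have [P1 [P2 [n1 n2 h]]] := @mul_cont_at y (inv c) U ecomp Nb.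
have n3 : nbhs y [set y' | (inv @^-1` P2) (sig y')].
  apply: sigC; exact: (cont_inv tax n2).
apply: (@filterS _ _ _ ((src @^-1` (src @` V)) `&` P1 `&` [set y' | (inv @^-1` P2) (sig y')])).
  move=> y' [[Sy' P1y'] P2y']; have [Vs es] := sigP y' Sy'.
  exists (mul y' (inv (sig y'))), (sig y'); split => //.
  - by apply: h => //; rewrite rinv es.
  - by rewrite smul ?sinv // rinv es.
  - by rewrite assoc ?rinv ?sinv // mulVl es mulr1.
by apply: filterI => //; apply: filterI.
Qed.

Lemma setmul_bisection B C : bisection src rng B -> bisection src rng C ->
  bisection src rng (setmul src rng mul B C).
Proof.
move=> [oB sB rB] [oC sC rC]; split.
- by apply: setmul_open => //; split.
- move=> _ _ /set_mem [b [c [Bb Cc ebc ->]]] /set_mem [b' [c' [Bb' Cc' ebc' ->]]].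
  rewrite !smul // => e.
  have ecc : c = c' by apply: sC; rewrite ?inE.
  subst c'; have ebb : b = b' by apply: sB; rewrite ?inE // ebc ebc'.
  by rewrite ebb.
- move=> _ _ /set_mem [b [c [Bb Cc ebc ->]]] /set_mem [b' [c' [Bb' Cc' ebc' ->]]].
  rewrite !rmul // => e.
  have ebb : b = b' by apply: rB; rewrite ?inE.
  subst b'; have ecc : c = c' by apply: rC; rewrite ?inE // -ebc -ebc'.
  by rewrite ecc.
Qed.

Lemma setmul_compact_open B C : bisection src rng B -> bisection src rng C ->
  compact B -> compact C ->
  [/\ bisection src rng (setmul src rng mul B C), compact (setmul src rng mul B C)
   & open (setmul src rng mul B C)].
Proof.
move=> bB bC cB cC; have bBC := setmul_bisection bB bC.
by split => //; [exact: setmul_compact | case: bBC].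
Qed.

End Topo3.

End MG3.
Import MG3.

Module MG4.
Set Implicit Arguments. Unset Strict Implicit. Unset Printing Implicit Defensive.
Local Open Scope classical_set_scope.
Local Open Scope ring_scope.

Section Folner1.
Variables (R : realType) (G : topologicalType) (src rng : G -> G) (mul : G -> G -> G) (inv : G -> G).
Hypothesis ax : groupoid_axioms src rng mul inv.
Let ss := ga_ss ax. Let rs := ga_rs ax. Let sr := ga_sr ax. Let rr := ga_rr ax.
Let smul := ga_smul ax. Let rmul := ga_rmul ax. Let assoc := ga_assoc ax.
Let mul1 := ga_mul1 ax. Let mulr1 := ga_mulr1 ax. Let sinv := ga_sinv ax.
Let rinv := ga_rinv ax. Let mulV := ga_mulV ax. Let mulVl := ga_mulVl ax.
Let invK := ga_invK ax.
Local Notation SM := (setmul src rng mul).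
Local Notation FL := (folner src rng mul).

Lemma folner_transl (K A : set G) (d : R) g :
  A `<=` [set x | src x = rng g] -> FL K d A ->
  FL K d ((fun y => mul y g) @` A) /\ (fun y => mul y g) @` A `<=` [set x | src x = src g].
Proof.
move=> sA [fA nA fD cD]; set rho := fun y => mul y g.
have injr : {in [set x | src x = rng g] &, injective rho}.
  move=> x y /set_mem ex /set_mem ey e; exact: (ga_cancelr ax ex ey e).
have KA : SM K A `<=` [set x | src x = rng g].
  by move=> _ [k [a [Kk Aa eka ->]]]; rewrite /= smul // sA.
have e1 : SM K (rho @` A) `\` rho @` A = rho @` (SM K A `\` A).
  apply/seteqP; split.
    move=> _ [[k [_ [Kk [a Aa <-] eka ->]]] nA'].
    have eka' : src k = rng a by rewrite eka /rho rmul // sA.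
    exists (mul k a); first split.
    - by exists k, a.
    - move=> Aka; apply: nA'; exists (mul k a) => //.
      by rewrite /rho assoc // sA.
    - by rewrite /rho assoc // sA.
  move=> _ [x [[k [a [Kk Aa eka ->]]] nAx] <-]; split.
    exists k, (rho a); split => //.
      by rewrite /rho rmul // sA.
    by rewrite /rho assoc // sA.
  move=> [a' Aa' e]; apply: nAx.
  have -> : mul k a = a' => //.
  apply: injr; rewrite ?inE //=; first by rewrite smul // sA.
  by apply: sA.
split; last by move=> _ [a Aa <-]; rewrite /= /rho smul // sA.
split.
- exact: finite_image.
- by case: nA => a Aa; exists (rho a), a.
- by rewrite e1; apply: finite_image.
rewrite e1 !cd_img_inj //.
  by move=> x y /set_mem /sA x1 /set_mem /sA y1; apply: injr; rewrite inE.
by move=> x y /set_mem [/KA x1 _] /set_mem [/KA y1 _]; apply: injr; rewrite inE.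
Qed.

Lemma setmulU (K X Y : set G) : SM K (X `|` Y) = SM K X `|` SM K Y.
Proof.
apply/seteqP; split.
  by move=> _ [k [a [Kk [Xa|Ya] e ->]]]; [left|right]; exists k, a.
by move=> _ [[k [a [Kk Xa e ->]]]|[k [a [Kk Ya e ->]]]]; exists k, a; split => //; [left|right].
Qed.

Lemma folner_union (K X Y : set G) (d : R) : 0 <= d ->
  FL K d X -> FL K d Y -> X `&` Y = set0 -> FL K d (X `|` Y).
Proof.
move=> d0 [fX nX fDX cDX] [fY nY fDY cDY] XY.
have sub : SM K (X `|` Y) `\` (X `|` Y) `<=` (SM K X `\` X) `|` (SM K Y `\` Y).
  rewrite setmulU => x [[KXx|KYx] nx]; [left|right]; split => // h; apply: nx; by [left|right].
have fD : finite_set ((SM K X `\` X) `|` (SM K Y `\` Y)) by rewrite finite_setU.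
split.
- by rewrite finite_setU.
- by case: nX => x Xx; exists x; left.
- exact: sub_finite_set sub fD.
apply: (le_trans (y := ((#|` fset_set (SM K X `\` X)|)%fset + (#|` fset_set (SM K Y `\` Y)|)%fset)%:R)).
  rewrite ler_nat; apply: (leq_trans (cd_le fD sub)); exact: cd_U.
rewrite cd_Udisj // !natrD mulrDr; exact: lerD.
Qed.

End Folner1.

End MG4.
Import MG4.

Module MG5.
Set Implicit Arguments. Unset Strict Implicit. Unset Printing Implicit Defensive.
Local Open Scope classical_set_scope.
Local Open Scope ring_scope.

Section Folner2.
Variables (R : realType) (G : topologicalType) (src rng : G -> G) (mul : G -> G -> G) (inv : G -> G).
Hypothesis ax : groupoid_axioms src rng mul inv.
Hypothesis lhr : local_homeomorphism rng.
Hypothesis lhs : local_homeomorphism src.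
Hypothesis ufa : ubiquitously_fiberwise_amenable src rng mul R.
Let ss := ga_ss ax. Let rs := ga_rs ax. Let sr := ga_sr ax. Let rr := ga_rr ax.
Let smul := ga_smul ax. Let rmul := ga_rmul ax. Let assoc := ga_assoc ax.
Let mul1 := ga_mul1 ax. Let mulr1 := ga_mulr1 ax. Let sinv := ga_sinv ax.
Let rinv := ga_rinv ax. Let mulV := ga_mulV ax. Let mulVl := ga_mulVl ax.
Let invK := ga_invK ax.
Local Notation SM := (setmul src rng mul).
Local Notation FL := (folner src rng mul).

Lemma large_folner (K : set G) (d : R) u : compact K -> 0 < d -> unit_space src u ->
  infinite_set [set x | src x = u] ->
  forall n, exists B, [/\ FL K d B, B `<=` [set x | src x = u] & (n <= #|` fset_set B|)%fset%N].
Proof.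
move=> cK d0 uu infG.
have [L [cL hL]] := ufa cK d0.
elim.
  have [A [fA sA]] := hL u uu; exists A; split => //.
  by move=> a /sA [[_ e]|->] //=; rewrite (ga_unit_s ax uu).
move=> n [B [fB sB nB]].
have [finB _ _ _] := fB.
set Bad := B `|` \bigcup_(x in B) ((fun l => mul (inv l) x) @` (L `&` rng @^-1` [set rng x])).
have fBad : finite_set Bad.
  rewrite /Bad finite_setU; split => //; apply: bigcup_finite => // x _.
  by apply: finite_image; apply: (lh_fin lhr).
have [g [Gug nBg]] : exists g, [set x | src x = u] g /\ ~ Bad g.
  have [g [Gg nBg]] := infinite_setN0 (infinite_setD infG fBad).
  by exists g.
set w := rng g.
have [A [fA sA]] := hL w (ga_rng_unit ax g).
have sA0 : A `<=` [set x | src x = rng g].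
  by move=> a /sA [[_ e]|->] //=; rewrite /w sr.
have [fA' sA'] := folner_transl ax sA0 fA.
set A' := (fun y => mul y g) @` A in fA' sA'.
have dis : B `&` A' = set0.
  apply/seteqP; split => // x [Bx [a Aa ex]]; apply: nBg.
  move: ex => /= ex; subst x.
  case: (sA a Aa) => [[La sa]|ea].
    right; exists (mul a g) => //; exists a.
      by split => //; rewrite /= rmul // sa.
    by rewrite /= -assoc ?sinv ?rinv ?sa // mulVl sa /w mul1.
  by left; move: Bx; rewrite ea /w mul1.
exists (B `|` A'); split.
- exact: folner_union (ltW d0) fB fA' dis.
- by move=> x [/sB|/sA'] //; rewrite /= Gug.
have [finA' nA' _ _] := fA'.
rewrite cd_Udisj //; apply: leq_trans (leq_add nB (cd_gt0 finA' nA')).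
by rewrite addn1.
Qed.

Lemma folner_with_u (K : set G) (eps : R) u : compact K -> 0 < eps -> unit_space src u ->
  exists A, [/\ FL K eps A, A `<=` [set x | src x = u] & A u].
Proof.
move=> cK e0 uu.
have suu := ga_unit_s ax uu.
case: (pselect (finite_set [set x | src x = u])) => [fin|infG].
  exists [set x | src x = u]; split => //.
  have e : SM K [set x | src x = u] `\` [set x | src x = u] = set0.
    apply/seteqP; split => // _ [[k [a [Kk Aa eka ->]]] nx].
    by apply: nx; rewrite /= smul.
  split => //; first by exists u.
    by rewrite e; exact: finite_set0.
  rewrite e cd_set0 mulr_ge0 //; exact: ltW.
set d := eps / 2.
have d0 : 0 < d by rewrite /d divr_gt0.
set c := #|` fset_set (K `&` src @^-1` [set u])|%fset.
have [B [fB sB nB]] := large_folner cK d0 uu infG (Num.bound (c%:R / d)).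
have cb : c%:R <= d * (#|` fset_set B|)%fset%:R.
  apply: ltW; rewrite mulrC -ltr_pdivrMr //.
  apply: (lt_le_trans (archi_boundP _)); first by rewrite divr_ge0 // ltW.
  by rewrite ler_nat.
exists (B `|` [set u]); split => //; last by right.
have [finB nB0 fDB cDB] := fB.
have fKu : finite_set (K `&` src @^-1` [set u]) by apply: (lh_fin lhs).
have sub : SM K (B `|` [set u]) `\` (B `|` [set u]) `<=`
    (SM K B `\` B) `|` (K `&` src @^-1` [set u]).
  rewrite setmulU => x [[KBx|[k [a [Kk -> eka ->]]]] nx].
    by left; split => // Bx; apply: nx; left.
  have eku : u = src k by rewrite eka (ga_unit_r ax uu).
  right; rewrite [in mul k u]eku mulr1; split => //=.
have fD : finite_set ((SM K B `\` B) `|` (K `&` src @^-1` [set u])) by rewrite finite_setU.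
split.
- by rewrite finite_setU; split => //; exact: finite_set1.
- by exists u; right.
- exact: sub_finite_set sub fD.
apply: (le_trans (y := ((#|` fset_set (SM K B `\` B)|)%fset + c)%:R)).
  rewrite ler_nat; apply: (leq_trans (cd_le fD sub)); exact: cd_U.
rewrite natrD.
apply: (le_trans (y := eps * (#|` fset_set B|)%fset%:R)).
  rewrite [eps]splitr mulrDl; apply: lerD => //.
apply: ler_wpM2l; first exact: ltW.
rewrite ler_nat; apply: cd_le; last by move=> x Bx; left.
by rewrite finite_setU; split => //; exact: finite_set1.
by move=> x [/sB|->].

Qed.

End Folner2.

End MG5.
Import MG5.

Module MG6.
Set Implicit Arguments. Unset Strict Implicit. Unset Printing Implicit Defensive.
Local Open Scope classical_set_scope.

Lemma cd_img_kernel (P U : choiceType) (f g : P -> U) (X : set P) : finite_set X ->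
  (forall p q, X p -> X q -> f p = f q -> g p = g q) ->
  (#|` fset_set (g @` X)| <= #|` fset_set (f @` X)|)%fset%N.
Proof.
move=> fX h.
case: (pselect (X !=set0)) => [[x0 Xx0]|nX]; last first.
  have -> : X = set0 by apply/seteqP; split => // x Xx; apply: nX; exists x.
  by rewrite image_set0 cd_set0.
pose hh y := g (xget x0 [set p | X p /\ f p = y]).
have -> : g @` X = hh @` (f @` X).
  apply/seteqP; split.
    move=> _ [p Xp <-]; exists (f p); first by exists p.
    have [Xq fq] := @xgetPex _ x0 [set q | X q /\ f q = f p] (ex_intro _ p (conj Xp erefl)).
    by rewrite /hh; apply: h.
  move=> _ [_ [p Xp <-] <-].
  have [Xq fq] := @xgetPex _ x0 [set q | X q /\ f q = f p] (ex_intro _ p (conj Xp erefl)).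
  by exists (xget x0 [set q | X q /\ f q = f p]).
by apply: cd_img_le; apply: finite_image.
Qed.

Section Sec.
Variables (G : topologicalType) (src : G -> G).
Definition sec (Z : set G) (v : G) := xget v [set x | Z x /\ src x = v].
Lemma sec_spec Z v : (src @` Z) v -> Z (sec Z v) /\ src (sec Z v) = v.
Proof. by move=> [x Zx e]; apply: (@xgetPex _ v [set x | Z x /\ src x = v]); exists x. Qed.
Lemma sec_uniq (Z : set G) (v x : G) : {in Z &, injective src} -> Z x -> src x = v -> sec Z v = x.
Proof.
move=> inj Zx e; have [Zs es] := sec_spec (ex_intro2 _ _ x Zx e).
by apply: inj; rewrite ?inE // es e.
Qed.
End Sec.

Section Conds.
Variables (G : topologicalType) (src : G -> G).
Hypothesis hG : hausdorff_space G.
Hypothesis lhs : local_homeomorphism src.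

Lemma cond_open (X : set G) u : open X ->
  nbhs u [set v | (src @` X) u -> (src @` X) v].
Proof.
move=> oX; case: (pselect ((src @` X) u)) => [h|h].
  have nX : nbhs u (src @` X) by apply: open_nbhs_nbhs; split => //; exact: (lh_open lhs oX).
  by move: nX; apply: filterS => v Xv _.
by apply: filterE => v /h.
Qed.

Lemma cond_compact (X : set G) u : compact X ->
  nbhs u [set v | (src @` X) v -> (src @` X) u].
Proof.
move=> cX; case: (pselect ((src @` X) u)) => [h|h].
  by apply: filterE => v _.
have nX : nbhs u (~` (src @` X)).
  apply: open_nbhs_nbhs; split => //; apply: closed_openC.
apply: compact_closed => //; apply: continuous_compact => //.
  by apply: continuous_subspaceT; case: lhs.
by move: nX; apply: filterS => v nv /nv.
Qed.

End Conds.

End MG6.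
Import MG6.

Module MG7.
Set Implicit Arguments. Unset Strict Implicit. Unset Printing Implicit Defensive.
Local Open Scope classical_set_scope.

Lemma inj_fiber_finite (G : Type) (f : G -> G) (V : set G) y :
  {in V &, injective f} -> finite_set (V `&` f @^-1` [set y]).
Proof.
move=> inj.
have [[z [Vz fz]]|nz] := pselect (exists z, V z /\ f z = y).
  apply: (@sub_finite_set _ _ [set z]); last exact: finite_set1.
  by move=> w [Vw fw]; apply: inj; rewrite ?inE //= fw fz.
apply: (@sub_finite_set _ _ set0); last exact: finite_set0.
by move=> w [Vw fw]; apply: nz; exists w.
Qed.

Section Constr.
Variables (G : topologicalType) (src rng : G -> G) (mul : G -> G -> G) (inv : G -> G).
Hypothesis ax : groupoid_axioms src rng mul inv.
Hypothesis tax : topological_groupoid_axioms src rng mul inv.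
Hypothesis hG : hausdorff_space G.
Hypothesis lhr : local_homeomorphism rng.
Hypothesis lhs : local_homeomorphism src.
Hypothesis amp : ample src rng.
Let ss := ga_ss ax. Let rs := ga_rs ax. Let sr := ga_sr ax. Let rr := ga_rr ax.
Let smul := ga_smul ax. Let rmul := ga_rmul ax. Let assoc := ga_assoc ax.
Let mul1 := ga_mul1 ax. Let mulr1 := ga_mulr1 ax. Let sinv := ga_sinv ax.
Let rinv := ga_rinv ax. Let mulV := ga_mulV ax. Let mulVl := ga_mulVl ax.
Let invK := ga_invK ax.
Local Notation SM := (setmul src rng mul).
Local Notation BIS := (bisection src rng).
Let scop := setmul_compact_open ax tax hG lhs.
Let smc := setmul_compact tax hG.
Let smb := setmul_bisection ax tax lhs.
Let invb := inv_bisection ax tax.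
Let invc := inv_compact tax.

Lemma L_B (A : set G) u : finite_set A -> A `<=` [set x | src x = u] -> A u ->
  unit_space src u -> isotropy src rng u = [set u] ->
  exists B : G -> set G,
    (forall a, A a -> [/\ BIS (B a), compact (B a), B a a &
                          (a = u -> B a `<=` unit_space src)]) /\
    (forall a b x y, A a -> A b -> a <> b -> B a x -> B b y -> rng x <> rng y).
Proof.
move=> fA sA Au uu iso.
have sepP : forall p : G * G, exists q : set G * set G,
    A p.1 -> A p.2 -> p.1 <> p.2 ->
    [/\ open q.1, open q.2, q.1 (rng p.1), q.2 (rng p.2) & q.1 `&` q.2 = set0].
  move=> [a b]; case: (pselect (A a /\ A b /\ a <> b)) => [[Aa [Ab nab]]|h]; last first.
    by exists (setT, setT) => /= Aa Ab nab; exfalso; apply: h.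
  have nr : rng a != rng b.
    by apply/eqP => e; apply: nab; apply: (ga_iso_inj ax iso) => //; [apply: sA|apply: sA].
  move: hG; rewrite open_hausdorff => hG'.
  have [[P Q] hPQ hO] := hG' _ _ nr.
  case: hPQ => /= /set_mem hP /set_mem hQ; case: hO => /= oP oQ /eqP ePQ.
  by exists (P, Q).
have [sep hsep] := choice sepP.
pose N a := \bigcap_(b in [set` fset_set A]) [set z | b <> a -> (sep (a, b)).1 z /\ (sep (b, a)).2 z].
have nN : forall a, A a -> nbhs (rng a) (N a).
  move=> a Aa; apply: filter_bigI => b; rewrite in_fset_set // inE => Ab.
  case: (pselect (b = a)) => [->|nba].
    by apply: filterE => z.
  have [hop1 _ r1 _ _] := hsep (a, b) Aa Ab (nesym nba).
  have [_ hop2 _ r2 _] := hsep (b, a) Ab Aa nba.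
  have n12 : nbhs (rng a) ((sep (a, b)).1 `&` (sep (b, a)).2).
    by apply: open_nbhs_nbhs; split => //; apply: openI.
  by move: n12; apply: filterS => z [h1 h2] _.
have BP : forall a, exists Ba : set G, A a ->
    [/\ BIS Ba, compact Ba, Ba a & Ba `<=` rng @^-1` N a `&` [set x | a = u -> unit_space src x]].
  move=> a; case: (pselect (A a)) => [Aa|nAa]; last by exists set0.
  have n1 : nbhs a (rng @^-1` N a) by apply: (cont_rng tax); apply: nN.
  have n2 : nbhs a [set x | a = u -> unit_space src x].
    case: (pselect (a = u)) => [eau|neau].
      by rewrite eau; move: (unit_nbhs ax tax lhs uu); apply: filterS => x ux _.
    by apply: filterE => x /neau.
  have [Ba [bB cB Ba_ sB]] := ample' amp (filterI n1 n2).
  by exists Ba.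
have [Bf hBf] := choice BP.
exists Bf; split.
  move=> a Aa; have [bB cB Ba sB] := hBf a Aa; split => // eau x /sB [_ h].
  exact: h eau.
move=> a b x y Aa Ab nab Bx By exy.
have [_ _ _ sBa] := hBf a Aa; have [_ _ _ sBb] := hBf b Ab.
have [Nx _] := sBa x Bx; have [Ny _] := sBb y By.
have inA : forall c, A c -> [set` fset_set A] c.
  by move=> c Ac; rewrite /= in_fset_set // inE.
have h1 := (Nx b (inA b Ab) (nesym nab)).1.
have h2 := (Ny a (inA a Aa) nab).2.
have [_ _ _ _ e] := hsep (a, b) Aa Ab nab.
have : ((sep (a, b)).1 `&` (sep (a, b)).2) (rng x) by split => //; rewrite exy.
by rewrite e.
Qed.

Lemma L_E (K A : set G) (u : G) : compact K -> finite_set A ->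
  exists (D : {fset G}) (E : G -> set G),
    [/\ (forall k, k \in D -> BIS (E k) /\ compact (E k)),
        K `<=` \bigcup_(k in [set` D]) E k &
        (forall k e, k \in D -> E k e -> (rng @` A) (src e) -> K e)].
Proof.
move=> cK fA.
have EP : forall k, exists Ek : set G, K k ->
   [/\ BIS Ek, compact Ek, Ek k & forall e, Ek e -> (rng @` A) (src e) -> K e].
  move=> k; case: (pselect (K k)) => [Kk|nKk]; last by exists set0.
  have [V [oV Vk injV _]] := lhs.2 k.
  pose Fk := [set e | V e /\ (rng @` A) (src e) /\ ~ K e].
  have fF : finite_set Fk.
    apply: (@sub_finite_set _ _ (\bigcup_(a in A) (V `&` src @^-1` [set rng a]))).
      by move=> e [Ve [[a Aa ea] _]]; exists a => //; split.
    by apply: bigcup_finite => // a _; apply: inj_fiber_finite.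
  have cF : closed Fk by apply: compact_closed => //; apply: finite_compact.
  have nX : nbhs k (V `&` ~` Fk).
    apply: open_nbhs_nbhs; split; first by apply: openI => //; apply: closed_openC.
    by split => // -[_ [_ h]].
  have [Ek [bE cE Ek_ sE]] := ample' amp nX.
  exists Ek => _; split => // e /sE [Ve nFe] re.
  by apply: contrapT => nKe; apply: nFe.
have [Ef hEf] := choice EP.
have op : forall k, K k -> open (Ef k) by move=> k Kk; have [[]] := hEf k Kk.
have cv : K `<=` cover K Ef by move=> k Kk; exists k => //; have [] := hEf k Kk.
have [D sD cov] := compact_cover' u cK op cv.
exists D, Ef; split => //.
  by move=> k /sD /set_mem /hEf [? ? _ _]; split.
by move=> k e /sD /set_mem /hEf [_ _ _ h]; apply: h.
Qed.


Lemma alg1 p q r : src p = src q -> src q = src r ->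
  mul (mul p (inv q)) (mul q (inv r)) = mul p (inv r).
Proof.
move=> pq qr.
have e1 : src q = rng (inv r) by rewrite rinv.
have e2 : mul (inv q) (mul q (inv r)) = inv r.
  by rewrite -assoc ?sinv // mulVl e1 mul1.
rewrite assoc ?e2 //; first by rewrite rinv.
by rewrite sinv rmul.
Qed.

Lemma L_main (R : realType) (K : set G) (eps : R) u A :
  compact K -> unit_space src u -> isotropy src rng u = [set u] ->
  folner src rng mul K eps A -> A `<=` [set x | src x = u] -> A u ->
  exists (F : finType) (C : F -> F -> set G) (iu : F),
    [/\ compact_open_multisection src rng mul C, C iu iu u &
        forall v, C iu iu v -> folner src rng mul K eps (fib src (\bigcup_(i in [set: F]) C i iu) v)].
Proof.
move=> cK uu iso fl sA Au.
have [fA nA fKA cKA] := fl.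
have [B [hB dB]] := L_B fA sA Au uu iso.
have [D [E [hE cov hEK]]] := L_E u cK fA.
set SA := fset_set A.
have inA : forall i : SA, A (fsval i).
  by move=> i; have := fsvalP i; rewrite in_fset_set // inE.
have toSA : forall a, A a -> a \in SA by move=> a Aa; rewrite in_fset_set // inE.
pose Bi (i : SA) := B (fsval i).
have hBi : forall i : SA, [/\ BIS (Bi i), compact (Bi i), Bi i (fsval i) &
     (fsval i = u -> Bi i `<=` unit_space src)] by move=> i; apply: hB.
pose T (p : D * SA) := SM (E (fsval p.1)) (Bi p.2).
have hT : forall p, [/\ BIS (T p), compact (T p) & open (T p)].
  move=> [j i]; have [bE cE] := hE _ (fsvalP j); have [bB cB _ _] := hBi i.
  exact: scop.
have n1 : nbhs u [set v | forall p, (src @` T p) v -> (src @` T p) u].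
  by apply: filter_forall => p; apply: (cond_compact hG lhs); case: (hT p).
have n2 : nbhs u [set v | forall pb : (D * SA) * SA,
    (src @` (T pb.1 `&` Bi pb.2)) u -> (src @` (T pb.1 `&` Bi pb.2)) v].
  apply: filter_forall => pb; apply: (cond_open lhs); apply: openI.
    by case: (hT pb.1).
  by case: (hBi pb.2) => -[].
have n3 : nbhs u [set v | forall pq : (D * SA) * (D * SA),
    (src @` (T pq.1 `&` T pq.2)) u -> (src @` (T pq.1 `&` T pq.2)) v].
  apply: filter_forall => pq; apply: (cond_open lhs); apply: openI.
    by case: (hT pq.1).
  by case: (hT pq.2).
have n4 : nbhs u [set v | forall i : SA, (src @` Bi i) v].
  apply: filter_forall => i; apply: open_nbhs_nbhs; split.
    by apply: (lh_open lhs); case: (hBi i) => -[].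
  by exists (fsval i); [case: (hBi i) | apply: sA].
have n5 := unit_nbhs ax tax lhs uu.
have [W [bW cW Wu sW]] := ample' amp (filterI n1 (filterI n2 (filterI n3 (filterI n4 n5)))).
have c1 : forall v, W v -> forall p, (src @` T p) v -> (src @` T p) u.
  by move=> v /sW [].
have c2 : forall v, W v -> forall p b, (src @` (T p `&` Bi b)) u -> (src @` (T p `&` Bi b)) v.
  by move=> v /sW [_ [h _]] p b; apply: (h (p, b)).
have c3 : forall v, W v -> forall p q, (src @` (T p `&` T q)) u -> (src @` (T p `&` T q)) v.
  by move=> v /sW [_ [_ [h _]]] p q; apply: (h (p, q)).
have c4 : forall v, W v -> forall i, (src @` Bi i) v.
  by move=> v /sW [_ [_ [_ [h _]]]].
have c5 : forall v, W v -> unit_space src v.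
  by move=> v /sW [_ [_ [_ [_ h]]]].
set iu : SA := FSetSub (toSA u Au).
have Bu_unit : Bi iu `<=` unit_space src by case: (hBi iu) => _ _ _; apply.
have WBu : forall v, W v -> Bi iu v.
  move=> v Wv; have [q Bq sq] := c4 v Wv iu.
  by have e := ga_unit_s ax (Bu_unit q Bq); rewrite sq in e; rewrite e.
pose Dv v := [set x | exists i : SA, Bi i x /\ src x = v].
pose d v (i : SA) := sec src (Bi i) v.
have hd : forall v, W v -> forall i, Bi i (d v i) /\ src (d v i) = v.
  by move=> v Wv i; apply: sec_spec; apply: c4.
have Bsrc : forall i : SA, {in Bi i &, injective src} by move=> i; case: (hBi i) => -[].
have Tsrc : forall p, {in T p &, injective src} by move=> p; case: (hT p) => -[].
have Dvd : forall v, W v -> Dv v = d v @` setT.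
  move=> v Wv; apply/seteqP; split.
    move=> x [i [Bx sx]]; exists i => //; exact: sec_uniq.
  by move=> _ [i _ <-]; exists i; apply: hd.
have dinj : forall v, W v -> injective (d v).
  move=> v Wv i j e; apply: val_inj; apply: contrapT => nij.
  have [Bi_ _] := hd v Wv i; have [Bj_ _] := hd v Wv j.
  by apply: (dB _ _ _ _ (inA i) (inA j) nij Bi_ Bj_); rewrite e.
have cdA : (#|` fset_set A| = #|` fset_set (@setT SA)|)%fset%N.
  have -> : A = (fun i : SA => fsval i) @` setT.
    apply/seteqP; split; last by move=> _ [i _ <-]; apply: inA.
    by move=> a Aa; exists (FSetSub (toSA a Aa)).
  by apply: cd_img_inj; [exact: finite_finset | move=> i j _ _; apply: val_inj].
have cdDv : forall v, W v -> (#|` fset_set (Dv v)| = #|` fset_set A|)%fset%N.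
  move=> v Wv; rewrite Dvd // cdA; apply: cd_img_inj; first exact: finite_finset.
  by move=> i j _ _; apply: dinj.
have DuA : A `<=` Dv u.
  move=> a Aa; exists (FSetSub (toSA a Aa)); split; last exact: sA.
  by have [] := hB a Aa.
pose f v p := sec src (T p) v.
pose Q v := [set p : D * SA | (src @` T p) v /\ ~ Dv v (f v p)].
have hf : forall v p, (src @` T p) v -> T p (f v p) /\ src (f v p) = v.
  by move=> v p h; apply: sec_spec.
have folDv : forall v, W v -> folner src rng mul K eps (Dv v).
  move=> v Wv.
  have sub1 : SM K (Dv v) `\` Dv v `<=` f v @` Q v.
    move=> _ [[k [y [Kk [i [By sy]] eky ->]]] nx].
    have [j jD Ej] := cov k Kk.
    pose p : D * SA := (FSetSub jD, i).
    have Tx : T p (mul k y) by exists k, y.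
    have sx : src (mul k y) = v by rewrite smul.
    have fe : f v p = mul k y by apply: sec_uniq => //; apply: Tsrc.
    exists p => //; split; first by exists (mul k y).
    by rewrite fe.
  have sub2 : f u @` Q u `<=` SM K A `\` A.
    move=> _ [[j i] [Tu nD] <-].
    have [Tfu sfu] := hf u (j, i) Tu.
    move: Tfu => [e [b [Ee Bb eb efe]]].
    have sb : src b = u by rewrite -sfu efe smul.
    have bi : b = fsval i.
      apply: (Bsrc i); rewrite ?inE //; first by case: (hBi i).
      by rewrite sb sA //; apply: inA.
    split.
      exists e, b; split => //.
      apply: (hEK _ _ (fsvalP j) Ee); exists b; last by rewrite eb.
      by rewrite bi; apply: inA.
      by rewrite bi; apply: inA.
    by move=> Ay; apply: nD; apply: DuA.
  have sub3 : Q v `<=` Q u.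
    move=> p [Tv nDv]; have Tu := c1 v Wv p Tv; split => //.
    move=> [b [Bb sb]]; apply: nDv.
    have [Tfu _] := hf u p Tu.
    have [z [Tz Bz] sz] := c2 v Wv p b (ex_intro2 _ _ (f u p) (conj Tfu Bb) sb).
    have -> : f v p = z by apply: sec_uniq => //; apply: Tsrc.
    by exists b.
  have ker : forall p q, Q v p -> Q v q -> f u p = f u q -> f v p = f v q.
    move=> p q Qp Qq e.
    have [Tu _] := sub3 p Qp; have [Tuq _] := sub3 q Qq.
    have [Tp sp] := hf u p Tu; have [Tq sq] := hf u q Tuq.
    rewrite -e in Tq.
    have [z [Tpz Tqz] sz] := c3 v Wv p q (ex_intro2 _ _ (f u p) (conj Tp Tq) sp).
    rewrite /f (@sec_uniq _ _ _ _ z (Tsrc p) Tpz sz).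
    by rewrite (@sec_uniq _ _ _ _ z (Tsrc q) Tqz sz).
  have finQv : finite_set (f v @` Q v) by apply: finite_image; exact: finite_finset.
  split.
  - by rewrite Dvd //; apply: finite_image; exact: finite_finset.
  - by exists (d v iu); exists iu; apply: hd.
  - exact: sub_finite_set sub1 finQv.
  rewrite cdDv //; apply: le_trans cKA; rewrite ler_nat.
  apply: leq_trans (cd_le finQv sub1) _.
  apply: leq_trans (cd_img_kernel (f := f u) (g := f v) finite_finset ker) _.
  apply: leq_trans _ (cd_le fKA sub2).
  apply: cd_le; first by apply: finite_image; exact: finite_finset.
  by move=> _ [p Qp <-]; exists p => //; apply: sub3.
have oW : open W by case: bW.
have oWpre : open (src @^-1` W) by apply: (proj1 (continuousP _) (cont_src tax)).
have clWpre : closed (src @^-1` W).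
  rewrite -[W]setCK -preimage_setC; apply: open_closedC.
  apply: (proj1 (continuousP _) (cont_src tax)); apply: closed_openC.
  exact: compact_closed.
pose beta a := B a `&` src @^-1` W.
have hbeta : forall i : SA, BIS (beta (fsval i)) /\ compact (beta (fsval i)).
  move=> i; have [[oB sB rB] cB _ _] := hBi i; split; last exact: compact_closedI.
  split; first exact: openI.
    by move=> x y /set_mem [Bx _] /set_mem [By _]; apply: sB; rewrite inE.
  by move=> x y /set_mem [Bx _] /set_mem [By _]; apply: rB; rewrite inE.
have bsrc : forall i : SA, {in beta (fsval i) &, injective src} by move=> i; case: (hbeta i) => -[].
have brng : forall i : SA, {in beta (fsval i) &, injective rng} by move=> i; case: (hbeta i) => -[].
pose C (i j : SA) := SM (beta (fsval i)) (inv @` beta (fsval j)).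
have Cdec : forall i j x, C i j x -> exists p q,
    [/\ beta (fsval i) p, beta (fsval j) q, src p = src q & x = mul p (inv q)].
  move=> i j x [p [_ [bp [q bq <-] e ->]]]; exists p, q; split => //.
  by rewrite e rinv.
have Cin : forall i j p q, beta (fsval i) p -> beta (fsval j) q -> src p = src q ->
    C i j (mul p (inv q)).
  move=> i j p q bp bq e; exists p, (inv q); split => //.
  by rewrite rinv.
have betaW : forall i : SA, forall x, Bi i x -> W (src x) -> beta (fsval i) x by [].
have Cii : forall i x, C i i x -> exists p, beta (fsval i) p /\ x = rng p.
  move=> i x /Cdec [p [q [bp bq e ->]]]; exists p; split => //.
  have -> : q = p by apply: (bsrc i); rewrite ?inE.
  exact: mulV.
exists SA, C, iu; split.
- split; last first.
    move=> i j; have bC : BIS (C i j) by apply: smb; [case: (hbeta i) | apply: invb; case: (hbeta j)].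
    split; last by case: bC.
    by apply: smc; [case: (hbeta i) | apply: invc; case: (hbeta j)].
  split.
  + by move=> i j; apply: smb; [case: (hbeta i) | apply: invb; case: (hbeta j)].
  + move=> i j k; apply/seteqP; split.
      move=> _ [y [z [/Cdec [p [q [bp bq e1 ->]]] /Cdec [q' [r [bq' br e2 ->]]] eyz ->]]].
      have eqq : q = q'.
        apply: (brng j); rewrite ?inE //.
        by move: eyz; rewrite smul ?rinv // sinv rmul // rinv.
      subst q'; rewrite alg1 //; apply: Cin => //.
      by rewrite e1 e2.
    move=> _ /Cdec [p [r [bp br e ->]]].
    have Wp : W (src p) by case: bp.
    have [q Bq sq] := c4 _ Wp j.
    have bq : beta (fsval j) q by split => //=; rewrite sq.
    exists (mul p (inv q)), (mul q (inv r)); split.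
    * by apply: Cin.
    * by apply: Cin => //; rewrite sq.
    * by rewrite smul ?rinv // sinv rmul // rinv sq e.
    * by rewrite alg1 // sq.
  + by move=> i x /Cii [p [_ ->]]; exact: (ga_rng_unit ax).
  + move=> i j nij; apply/seteqP; split => // x [/Cii [p [[Bp _] ->]] /Cii [q [[Bq _] eq]]].
    apply: (dB _ _ _ _ (inA i) (inA j) _ Bp Bq eq).
    by move=> e; move/eqP: nij; apply; exact: val_inj.
- have Buu : beta (fsval iu) u.
    split; first by case: (hBi iu).
    by rewrite /= (ga_unit_s ax uu).
  have := Cin iu iu u u Buu Buu erefl.
  by rewrite mulV (ga_unit_r ax uu).
move=> v Cv.
have Wv : W v.
  have [p [[Bp Wp] ->]] := Cii iu v Cv.
  have up := Bu_unit p Bp.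
  by rewrite (ga_unit_r ax up) -(ga_unit_s ax up).
have -> : fib src (\bigcup_(i in [set: SA]) C i iu) v = Dv v.
  apply/seteqP; split.
    move=> x [[i _ /Cdec [p [q [bp [Bq Wq] e ->]]]] sx].
    have uq := Bu_unit q Bq.
    have ex : mul p (inv q) = p.
      by rewrite (ga_unit_inv ax uq) -(ga_unit_s ax uq) -e mulr1.
    rewrite ex in sx *; exists i; split => //; by case: bp.
  move=> x [i [Bx sx]]; split => //; exists i => //.
  have uv := c5 v Wv.
  have -> : x = mul x (inv v).
    by rewrite (ga_unit_inv ax uv) -sx mulr1.
  apply: Cin => //.
    by rewrite /beta; split => //=; rewrite sx.
  by split; [apply: WBu | rewrite /= (ga_unit_s ax uv)].
  by rewrite sx (ga_unit_s ax uv).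
exact: folDv.
Qed.
End Constr.

End MG7.
Import MG7.

Unset Implicit Arguments.
Local Open Scope classical_set_scope.
Local Open Scope ring_scope.

Theorem mainTheorem8 (R : realType) (G : topologicalType)
  (src rng : G -> G) (mul : G -> G -> G) (inv : G -> G) :
  ample_groupoid src rng mul inv ->
  ubiquitously_fiberwise_amenable src rng mul R ->
  forall u : G, unit_space src u -> isotropy src rng u = [set u] ->
  forall (K : set G) (eps : R), compact K -> 0 < eps ->
  exists (F : finType) (C : F -> F -> set G) (iu : F),
    [/\ compact_open_multisection src rng mul C,
        C iu iu u &
        forall v, C iu iu v ->
          folner src rng mul K eps
            (fib src (\bigcup_(i in [set: F]) C i iu) v)].
Proof.
move=> [ax [tax [hG [_ [_ [lhr [lhs [amp _]]]]]]]] ufa u uu iso K eps cK e0.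
have [A [fl sA Au]] := folner_with_u ax lhr lhs ufa cK e0 uu.
exact: (L_main ax tax hG lhs amp cK uu iso fl sA Au).
Qed.
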